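(* Let $k\ge 2$ and let $T_1,\dots,T_k$ be finite sets. Let $\widetilde H=(\widetilde h_{j,i})_{1\le i,j\le k}$ be a $k\times k$ lower-triangular matrix of nonnegative integers with zero diagonal. Suppose there exists a reference structure $(f_2,\dots,f_k)$ on the chain $T_k\to\cdots\to T_1$ whose linear join matrix equals $\widetilde H$. Then: (L1) $\widetilde h_{j,i}\le \min_{i\le n\le j}|T_n|$ for all $1\le i<j\le k$; (L2) $\widetilde h_{i+1,i}\ge \widetilde h_{i+2,i}\ge\cdots\ge \widetilde h_{k,i}$ for all $1\le i\le k-1$; (L3) $\widetilde h_{j,1}\le \widetilde h_{j,2}\le\cdots\le \widetilde h_{j,j-1}$ for all $2\le j\le k$; (L4) $\widetilde h_{j,i+1}-\widetilde h_{j+1,i+1}\ge \widetilde h_{j,i}-\widetilde h_{j+1,i}$ for all indices with $1\le i<j-1<k-1$ (i.e. $i+1<j<k$).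
   Context: A reference structure on the chain $T_k\to\cdots\to T_1$ is a family of partial functions $f_n:T_n\rightharpoonup T_{n-1}$ for $2\le n\le k$ (each tuple $t\in T_n$ references at most one tuple $f_n(t)\in T_{n-1}$; ''$t$ references $t'$'' means $f_n(t)=t'$). For $1\le i<j\le k$, a tuple $t\in T_i$ is a root of $T_j\to\cdots\to T_i$ if there exist $t_{i+1}\in T_{i+1},\dots,t_j\in T_j$ with $f_n(t_n)=t_{n-1}$ for all $i<n\le j$, where $t_i=t$. Let $S_{j,i}\subseteq T_i$ be the set of such roots and $h_{j,i}=|S_{j,i}|$. The linear join matrix of the reference structure is the $k\times k$ lower-triangular matrix $H$ with entries $h_{j,i}$ for $j>i$ and $0$ on and above the diagonal. *)

(* Defs.v *)
From HB Require Import structures.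
From mathcomp Require Import all_boot all_order all_algebra.
Set Implicit Arguments. Unset Strict Implicit. Unset Printing Implicit Defensive.

(* A chain of finite sets T 1, ..., T k (indexed by nat; only 1..k matter).
   A reference structure is given by partial functions
   f n : T (n+1) -> option (T n), i.e. f n is the paper's f_{n+1}:
   T_{n+1} ⇀ T_n ("f n u = Some t" means u references t). *)

(* roots f i d : the roots in T i of the chain T (i+d) -> ... -> T i, i.e.
   t \in roots f i d iff there are t_{i+1},...,t_{i+d} with
   f_n(t_n) = t_{n-1}, t_i = t.  Defined by recursion on d = j - i. *)
Fixpoint roots (T : nat -> finType) (f : forall n, T n.+1 -> option (T n))
  (i d : nat) {struct d} : {set T i} :=
  match d with
  | 0 => setT
  | d'.+1 => [set t : T i | [exists u in roots f i.+1 d', f i u == Some t]]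
  end.

Definition hjoin (T : nat -> finType) (f : forall n, T n.+1 -> option (T n))
  (j i : nat) : nat := #|roots f i (j - i)|.

Definition join_matrix_entry (T : nat -> finType)
  (f : forall n, T n.+1 -> option (T n)) (j i : nat) : nat :=
  if i < j then hjoin f j i else 0.

(* Main.v *)
Require Import Defs.
From HB Require Import structures.
From mathcomp Require Import all_boot all_order all_algebra.
From mathcomp Require Import zify.
Import Order.TTheory GRing.Theory Num.Theory.
Local Notation roots := Defs.roots.

Section Aux.
Variables (T : nat -> finType) (f : forall n, T n.+1 -> option (T n)).

Lemma roots_sub i d : roots f i d.+1 \subset roots f i d.
Proof.
elim: d i => [|d IH] i; first exact: subsetT.
apply/subsetP => t; rewrite !inE => /existsP [u /andP [Hu Hf]].
apply/existsP; exists u; rewrite Hf andbT.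
exact: (subsetP (IH i.+1)).
Qed.

Lemma img_card (n : nat) (X : {set T n.+1}) :
  #|[set t : T n | [exists u in X, f n u == Some t]]| <= #|X|.
Proof.
set Y := [set t : T n | _].
rewrite -(card_imset Y (@Some_inj _)).
apply: leq_trans (leq_imset_card (f n) X).
apply: subset_leq_card; apply/subsetP => o /imsetP [t]; rewrite inE.
move=> /existsP [u /andP [Hu /eqP Hf]] ->; apply/imsetP; exists u => //.
Qed.

Lemma roots_card_le i d : #|roots f i d.+1| <= #|roots f i.+1 d|.
Proof. exact: img_card. Qed.

Lemma roots_le_T d : forall i n, i <= n <= i + d -> #|roots f i d| <= #|T n|.
Proof.
elim: d => [|d IH] i n /andP [H1 H2].
  have En : n = i by apply/eqP; rewrite eqn_leq H1 andbT -(addn0 i).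
  subst n; exact: max_card.
case: (eqVneq i n) => [Ein|Hne]; first by subst; exact: max_card.
apply: leq_trans (roots_card_le i d) _; apply: IH.
by rewrite ltn_neqAle Hne H1 /= addSn -addnS.
Qed.

Lemma roots_L4 i d :
  (#|roots f i d.+1|%:Z - #|roots f i d.+2|%:Z <=
   #|roots f i.+1 d|%:Z - #|roots f i.+1 d.+1|%:Z)%R.
Proof.
set A := roots f i.+1 d; set B := roots f i.+1 d.+1.
have sBA : B \subset A by exact: roots_sub.
have cD : #|A :\: B| = #|A| - #|B| by rewrite cardsD (setIidPr sBA).
have hB : #|B| <= #|A| by exact: subset_leq_card.
have himg : #|roots f i d.+1| <= #|roots f i d.+2| + #|A :\: B|.
  apply: leq_trans (_ : #|roots f i d.+2 :|: [set t : T i | [exists u in A :\: B, f i u == Some t]]| <= _).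
    apply: subset_leq_card; apply/subsetP => t; rewrite !inE -/B.
    move=> /existsP [u /andP [Hu Hf]].
    case HuB: (u \in B).
      by apply/orP; left; apply/existsP; exists u; apply/andP; split.
    by apply/orP; right; apply/existsP; exists u; rewrite in_setD HuB Hu.
  rewrite cardsU; apply: leq_trans (leq_subr _ _) _; rewrite leq_add2l; exact: img_card.
rewrite cD in himg.
have : (#|roots f i d.+1|%:Z <= #|roots f i d.+2|%:Z + (#|A|%:Z - #|B|%:Z))%R.
  by rewrite subzn // -PoszD lez_nat.
by move=> H; rewrite lerBlDl.
Qed.

End Aux.

Theorem theorem1 (k : nat) (hk : 2 <= k) (T : nat -> finType)
  (Ht : nat -> nat -> nat)
  (Hlow : forall i j, 1 <= i <= k -> 1 <= j <= k -> j <= i -> Ht j i = 0)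
  (Hex : exists f : forall n, T n.+1 -> option (T n),
      forall i j, 1 <= i <= k -> 1 <= j <= k ->
        Ht j i = join_matrix_entry f j i) :
  (* (L1) *)
  (forall i j, 1 <= i -> i < j -> j <= k ->
     Ht j i <= \big[minn/#|T i|]_(i <= n < j.+1) #|T n|) /\
  (* (L2) *)
  (forall i j, 1 <= i -> i < j -> j < k -> Ht j.+1 i <= Ht j i) /\
  (* (L3) *)
  (forall i j, 1 <= i -> i.+1 < j -> j <= k -> Ht j i <= Ht j i.+1) /\
  (* (L4) *)
  (forall i j, 1 <= i -> i.+1 < j -> j < k ->
     ((Ht j i)%:Z - (Ht j.+1 i)%:Z <= (Ht j i.+1)%:Z - (Ht j.+1 i.+1)%:Z)%R).
Proof.
case: Hex => f Hf.
have E : forall i j, 1 <= i -> i < j -> j <= k -> Ht j i = #|roots f i (j - i)|.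
  move=> i j H1 H2 H3; rewrite Hf; last by rewrite H3 andbT (leq_trans H1 (ltnW H2)).
    by rewrite /join_matrix_entry H2.
  by rewrite H1 (leq_trans (ltnW H2) H3).
split; [|split; [|split]].
- move=> i j H1 H2 H3; rewrite E // big_nat_cond.
  apply: (big_ind (fun y => #|roots f i (j - i)| <= y)).
  + by apply: roots_le_T; rewrite leqnn leq_addr.
  + by move=> x y Hx Hy; rewrite leq_min Hx Hy.
  + move=> n; rewrite andbT => /andP [Hn1 Hn2]; apply: roots_le_T.
    by rewrite Hn1 subnKC // ltnW.
- move=> i j H1 H2 H3; rewrite (E i j.+1 H1 ltac:(lia) ltac:(lia)) (E i j H1 ltac:(lia) ltac:(lia)).
  have -> : j.+1 - i = (j - i).+1 by lia.
  exact/subset_leq_card/roots_sub.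
- move=> i j H1 H2 H3; rewrite (E i j H1 ltac:(lia) ltac:(lia)) (E i.+1 j ltac:(lia) ltac:(lia) ltac:(lia)).
  rewrite -(subnSK (ltnW H2)); exact: roots_card_le.
- move=> i j H1 H2 H3.
  rewrite (E i j H1 ltac:(lia) ltac:(lia)) (E i j.+1 H1 ltac:(lia) ltac:(lia)).
  rewrite (E i.+1 j ltac:(lia) ltac:(lia) ltac:(lia)) (E i.+1 j.+1 ltac:(lia) ltac:(lia) ltac:(lia)).
  have -> : j - i = (j - i.+1).+1 by lia.
  have -> : j.+1 - i = (j - i.+1).+2 by lia.
  have -> : j.+1 - i.+1 = (j - i.+1).+1 by lia.
  exact: roots_L4.
Qed.
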